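(* Let $n \in \mathbb{N}$. (i) Let $p, q \in \mathbb{N}$ with $5F_{n+2}-4 \le p < 5F_{n+3}-4$, $5F_{n+1}-4 \le q < 5F_{n+2}-4$ and $b_q = a_p + 1$. Then: (i.1) if $b_{q+1} - b_q = 3$, then $a_{p+1} = a_p + 2$, $a_{p+2} = a_p + 3$ and $b_{q+1} = a_{p+2} + 1$; (i.2) if $b_{q+1} - b_q = 2$, then $a_{p+1} = a_p + 2$ and $b_{q+1} = a_{p+1} + 1$. (ii) $\{a_{5F_{n+2}-4+u} : u = 0,1,\dots,5F_{n+1}\} \cup \{b_{5F_{n+1}-4+u} : u = 0,1,\dots,5F_n\} = \{5F_{n+3}-4, 5F_{n+3}-3, \dots, 5F_{n+4}-3\}$. (iii) $\{a_{5F_{n+2}-4+u} : u = 0,1,\dots,5F_{n+1}\} \cap \{b_{5F_{n+1}-4+u} : u = 0,1,\dots,5F_n\} = \emptyset$. (iv) $\{a_m : m \in \mathbb{N}\} \cap \{b_m : m \in \mathbb{N}\} = \emptyset$. (v) $\{a_m : m \in \mathbb{N}\} \cup \{b_m : m \in \mathbb{N}\} = \{6,7,8,\dots\}$.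
   Context: Fibonacci numbers: $F_1 = F_2 = 1$, $F_{i+2} = F_{i+1} + F_i$. Let $\sigma$ be the substitution on finite sequences over $\{1,2\}$ replacing each entry $1$ by $2$ and each entry $2$ by $2,1$. Let $C_{1,1} = (1)$, $C_{i+1,1} = \sigma(C_{i,1})$. For $i \in \mathbb{N}$ let $C_i$ be the concatenation of five copies of $C_{i,1}$. Let $(c_n)_{n \in \mathbb{N}}$ be the infinite sequence obtained by concatenating $C_1, C_2, C_3, \dots$ in order, and let $d_n = c_n + 1$. Define $a_1 = 6$, $a_n = 6 + \sum_{i=1}^{n-1} c_i$, and $b_1 = 12$, $b_n = 12 + \sum_{i=1}^{n-1} d_i$ for $n \in \mathbb{N}$. *)

(* Defs.v *)
From mathcomp Require Import all_boot.
Set Implicit Arguments. Unset Strict Implicit. Unset Printing Implicit Defensive.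

Fixpoint fib (i : nat) : nat :=
  match i with
  | 0 => 0
  | 1 => 1
  | (j.+1 as k).+1 => fib k + fib j
  end.

(* The substitution sigma: 1 |-> 2, 2 |-> 2,1 (anything else treated as 2). *)
Definition sigma (s : seq nat) : seq nat :=
  flatten [seq (if x == 1 then [:: 2] else [:: 2; 1]) | x <- s].

(* C_{i,1} for i >= 1: C_{1,1} = (1), C_{i+1,1} = sigma C_{i,1}. *)
Definition Cblock (i : nat) : seq nat := iter i.-1 sigma [:: 1].

Definition Cword (i : nat) : seq nat := flatten (nseq 5 (Cblock i)).

(* c_n (n >= 1) = n-th entry (1-indexed) of C_1 C_2 C_3 ...; the first n
   blocks already have length >= 5n >= n, so this prefix suffices. *)
Definition c_seq (n : nat) : nat :=
  nth 0 (flatten [seq Cword i | i <- iota 1 n]) n.-1.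

Definition d_seq (n : nat) : nat := (c_seq n).+1.

Definition a_seq (n : nat) : nat := 6 + \sum_(1 <= i < n) c_seq i.
Definition b_seq (n : nat) : nat := 12 + \sum_(1 <= i < n) d_seq i.

(* Main.v *)
Require Import Defs.
From mathcomp Require Import all_boot.
From mathcomp Require Import zify.
Set Implicit Arguments. Unset Strict Implicit.

Definition all12 (w : seq nat) := all (fun x => (x == 1) || (x == 2)) w.
Definition ps (w : seq nat) u := sumn (take u w).

Lemma sigma_cons y w : sigma (y :: w) = (if y == 1 then [:: 2] else [:: 2; 1]) ++ sigma w.
Proof. by []. Qed.

Lemma sigma_cat s1 s2 : sigma (s1 ++ s2) = sigma s1 ++ sigma s2.
Proof. by rewrite /sigma map_cat flatten_cat. Qed.

Lemma all12_sigma w : all12 (sigma w).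
Proof. elim: w => [|y w IH] //; rewrite sigma_cons; by case: (y == 1). Qed.

Lemma size_sigma w : all12 w -> size (sigma w) = sumn w.
Proof.
elim: w => [|y w IH] //= /andP [Hy Hw]; rewrite sigma_cons size_cat IH //.
by case/orP: Hy => /eqP ->.
Qed.

Lemma sumn_sigma w : all12 w -> sumn (sigma w) = sumn w + size w.
Proof.
elim: w => [|y w IH] //= /andP [Hy Hw]; rewrite sigma_cons sumn_cat IH //.
case/orP: Hy => /eqP -> /=; lia.
Qed.

Lemma ps_le w u : ps w u <= sumn w.
Proof. by rewrite /ps -{2}(cat_take_drop u w) sumn_cat leq_addr. Qed.

Lemma ps_succ w q : q < size w -> ps w q.+1 = ps w q + nth 0 w q.
Proof. move=> H; by rewrite /ps (take_nth 0 H) sumn_rcons. Qed.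

Lemma ML1 w x : all12 w -> x <= sumn (sigma w) + 1 ->
  (exists2 u, u <= size (sigma w) & x = ps (sigma w) u) \/
  (exists2 v, v <= size w & x = (ps w v + v).+1).
Proof.
elim: w x => [|y w IH] x.
  move=> _ /=; case: x => [|[|x]] // _.
    by left; exists 0.
  by right; exists 0.
move=> /= /andP [Hy Hw]; rewrite sigma_cons.
case/orP: Hy => /eqP -> /=.
  case: x => [|[|x]] Hx.
  - by left; exists 0.
  - by right; exists 0.
  have Hx' : x <= sumn (sigma w) + 1 by lia.
  case: (IH x Hw Hx') => [[u Hu ->]|[v Hv ->]].
    by left; exists u.+1 => //; rewrite /ps /=.
  by right; exists v.+1 => //; rewrite /ps /=; lia.
case: x => [|[|[|x]]] Hx.
- by left; exists 0.
- by right; exists 0.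
- by left; exists 1.
have Hx' : x <= sumn (sigma w) + 1 by lia.
case: (IH x Hw Hx') => [[u Hu ->]|[v Hv ->]].
  by left; exists u.+2 => //; rewrite /ps /=; lia.
by right; exists v.+1 => //; rewrite /ps /=; lia.
Qed.

Lemma ML2 w u v : all12 w -> ps (sigma w) u <> (ps w v + v).+1.
Proof.
elim: w u v => [|y w IH] u v.
  by move=> _; rewrite /ps /=.
move=> /= /andP [Hy Hw]; rewrite sigma_cons.
case/orP: Hy => /eqP -> /=.
  case: u => [|u]; first by rewrite /ps.
  case: v => [|v]; rewrite /ps /=.
    rewrite ?take0 /=; lia.
  move: (IH u v Hw); rewrite /ps; lia.
case: u => [|[|u]]; first by rewrite /ps.
  case: v => [|v]; rewrite /ps /= ?take0 /=; lia.
case: v => [|v]; rewrite /ps /= ?take0 /=; first lia.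
move: (IH u v Hw); rewrite /ps; lia.
Qed.

Lemma ML3 w p q : all12 w -> q < size w -> ps (sigma w) p = ps w q + q ->
  ps (sigma w) p.+1 = ps (sigma w) p + 2 /\
  (nth 0 w q = 2 -> p.+2 <= size (sigma w) /\ ps (sigma w) p.+2 = ps (sigma w) p + 3).
Proof.
elim: w p q => [|y w IH] p q //.
move=> /= /andP [Hy Hw]; rewrite sigma_cons.
case/orP: Hy => /eqP -> /=.
  case: q => [|q] Hq.
    case: p => [|p]; rewrite /ps /= ?take0 //=; lia.
  case: p => [|p]; rewrite /ps /= ?take0 /=; first lia.
  move=> E; have E' : ps (sigma w) p = ps w q + q by rewrite /ps; lia.
  case: (IH p q Hw Hq E') => H1 H2; rewrite /ps in H1 H2; split; first lia.
  move=> /H2 [H3 H4]; split; lia.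
case: q => [|q] Hq.
  case: p => [|p]; rewrite /ps /= ?take0 //=; lia.
case: p => [|[|p]]; rewrite /ps /= ?take0 /=; try lia.
move=> E; have E' : ps (sigma w) p = ps w q + q by rewrite /ps; lia.
case: (IH p q Hw Hq E') => H1 H2; rewrite /ps in H1 H2; split; first lia.
move=> /H2 [H3 H4]; split; lia.
Qed.

Lemma fib_ge k : k.+1 <= fib k.+2 /\ k.+2 <= fib k.+3.
Proof.
elim: k => [|k [IH1 IH2]]; first by [].
split => //. have -> : fib k.+4 = fib k.+3 + fib k.+2 by []. lia.
Qed.

Lemma fibS k : fib k.+2 = fib k.+1 + fib k.
Proof. by []. Qed.

Lemma fib_pos k : 0 < fib k.+1.
Proof. case: k => [|k] //; case: (fib_ge k); lia. Qed.

Lemma Cblock_props j : [/\ all12 (Cblock j.+1), size (Cblock j.+1) = fib j.+1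
   & sumn (Cblock j.+1) = fib j.+2].
Proof.
elim: j => [|j [H1 H2 H3]]; first by [].
have -> : Cblock j.+2 = sigma (Cblock j.+1) by [].
split; first exact: all12_sigma.
  by rewrite size_sigma.
by rewrite sumn_sigma // H2 H3 (fibS j.+1).
Qed.

Lemma Cword_eq j : Cword j = Cblock j ++ Cblock j ++ Cblock j ++ Cblock j ++ Cblock j.
Proof. by rewrite /Cword /= cats0. Qed.

Lemma Cword_props j : [/\ all12 (Cword j.+1), size (Cword j.+1) = 5 * fib j.+1
   & sumn (Cword j.+1) = 5 * fib j.+2].
Proof.
case: (Cblock_props j) => H1 H2 H3; rewrite Cword_eq.
split; first by rewrite /all12 !all_cat; move: H1; rewrite /all12 => ->.
  rewrite !size_cat H2; lia.
rewrite !sumn_cat H3; lia.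
Qed.

Lemma Cword_sigma j : Cword j.+2 = sigma (Cword j.+1).
Proof. by rewrite !Cword_eq !sigma_cat. Qed.

Definition W N := flatten [seq Cword i | i <- iota 1 N].

Lemma W_S k : W k.+1 = W k ++ Cword k.+1.
Proof.
have E : iota 1 k.+1 = iota 1 k ++ [:: k.+1].
  by rewrite -[k.+1 in LHS]addn1 iotaD add1n.
by rewrite /W E map_cat flatten_cat /= cats0.
Qed.

Lemma W_prefix N M : N <= M -> exists t, W M = W N ++ t.
Proof.
move=> H; exists (flatten [seq Cword i | i <- iota (1 + N) (M - N)]).
by rewrite /W -{1}(subnKC H) iotaD map_cat flatten_cat.
Qed.

Lemma W_props k : [/\ all12 (W k), size (W k) + 5 = 5 * fib k.+2
   & sumn (W k) + 10 = 5 * fib k.+3].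
Proof.
elim: k => [|k [H1 H2 H3]]; first by [].
case: (Cword_props k) => G1 G2 G3.
rewrite W_S /all12 all_cat size_cat sumn_cat; split.
- by move: H1 G1; rewrite /all12 => -> ->.
- rewrite fibS; lia.
- rewrite (fibS k.+2); lia.
Qed.

Lemma size_W_ge k : k <= size (W k).
Proof. case: (W_props k) (fib_ge k) => _ H _ [H' _]; lia. Qed.

Lemma c_W m M : m < M -> c_seq m.+1 = nth 0 (W M) m.
Proof.
move=> H; rewrite /c_seq /=.
have [t ->] := W_prefix H; rewrite nth_cat.
have -> : m < size (W m.+1) by have := size_W_ge m.+1; lia.
by [].
Qed.

Lemma c12 m : c_seq m.+1 = 1 \/ c_seq m.+1 = 2.
Proof.
rewrite (@c_W m m.+1) //.
case: (W_props m.+1) => H _ _.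
have Hm : m < size (W m.+1) by have := size_W_ge m.+1; lia.
have := allP H _ (mem_nth 0 Hm) => /orP [] /eqP ->; auto.
Qed.

Lemma a_S m : a_seq m.+2 = a_seq m.+1 + c_seq m.+1.
Proof. by rewrite /a_seq big_nat_recr //= addnA. Qed.

Lemma b_S m : b_seq m.+2 = b_seq m.+1 + (c_seq m.+1).+1.
Proof. by rewrite /b_seq big_nat_recr //= addnA. Qed.

Lemma a_take M m : m <= M -> a_seq m.+1 = 6 + sumn (take m (W M)).
Proof.
elim: m => [|m IH] H.
  by rewrite /a_seq big_geq // take0.
rewrite a_S IH; last lia.
have Hm : m < size (W M) by have := size_W_ge M; lia.
rewrite (take_nth 0 Hm) sumn_rcons (@c_W m M) //; lia.
Qed.

Lemma b_take M m : m <= M -> b_seq m.+1 = 12 + sumn (take m (W M)) + m.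
Proof.
elim: m => [|m IH] H.
  by rewrite /b_seq big_geq // take0.
rewrite b_S IH; last lia.
have Hm : m < size (W M) by have := size_W_ge M; lia.
rewrite (take_nth 0 Hm) sumn_rcons (@c_W m M) //; lia.
Qed.

Lemma take_block k u M : u <= size (Cword k.+1) -> k.+1 <= M ->
  take (size (W k) + u) (W M) = W k ++ take u (Cword k.+1).
Proof.
move=> Hu HM; have [t ->] := W_prefix HM.
rewrite W_S -catA take_cat.
have -> : (size (W k) + u < size (W k)) = false by lia.
rewrite addKn take_cat.
case: ltnP => H //.
have -> : u = size (Cword k.+1) by lia.
by rewrite subnn take0 cats0 take_size.
Qed.

Lemma a_block k u : u <= size (Cword k.+1) ->
  a_seq (size (W k) + u).+1 = 6 + sumn (W k) + ps (Cword k.+1) u.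
Proof.
move=> Hu; rewrite (@a_take (size (W k) + u + k.+1)); last lia.
by rewrite take_block ?sumn_cat ?addnA //; lia.
Qed.

Lemma b_block k u : u <= size (Cword k.+1) ->
  b_seq (size (W k) + u).+1 = 12 + sumn (W k) + size (W k) + (ps (Cword k.+1) u + u).
Proof.
move=> Hu; rewrite (@b_take (size (W k) + u + k.+1)); last lia.
rewrite take_block ?sumn_cat /ps; lia.
Qed.

Lemma facts k :
  size (W k.+1) + 5 = 5 * fib k.+3 /\ size (W k) + 5 = 5 * fib k.+2 /\
      sumn (W k.+1) + 10 = 5 * fib k.+4 /\ size (Cword k.+1) = 5 * fib k.+1 /\
      size (sigma (Cword k.+1)) = 5 * fib k.+2 /\
      sumn (sigma (Cword k.+1)) = 5 * fib k.+3 /\ all12 (Cword k.+1).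
Proof.
case: (W_props k.+1) => _ A1 A2; case: (W_props k) => _ B1 _.
case: (Cword_props k.+1) => _ C1 C2; case: (Cword_props k) => D0 D1 D2.
rewrite -Cword_sigma C1 C2; do !split => //; lia.
Qed.

Lemma Aform k u : u <= size (sigma (Cword k.+1)) ->
  a_seq (size (W k.+1) + u).+1 = 6 + sumn (W k.+1) + ps (sigma (Cword k.+1)) u.
Proof. rewrite -Cword_sigma => H; exact: a_block. Qed.

Lemma Bform k v : v <= size (Cword k.+1) ->
  b_seq (size (W k) + v).+1 = 6 + sumn (W k.+1) + (ps (Cword k.+1) v + v).+1.
Proof.
move=> H; rewrite b_block // W_S sumn_cat.
case: (Cword_props k) => _ _ C; case: (W_props k) => _ B _; lia.
Qed.

Lemma part_ii k x :
  ((exists2 u, u <= 5 * fib k.+2 & x = a_seq (5 * fib k.+3 - 4 + u)) \/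
   (exists2 u, u <= 5 * fib k.+1 & x = b_seq (5 * fib k.+2 - 4 + u)))
  <-> 5 * fib k.+4 - 4 <= x <= 5 * fib k.+4.+1 - 3.
Proof.
case: (facts k) => [F1 [F2 [F3 [F4 [F5 [F6 F7]]]]]].
have F8 := fibS k.+3.
split.
  case=> [[u Hu ->]|[u Hu ->]].
    have -> : 5 * fib k.+3 - 4 + u = (size (W k.+1) + u).+1 by lia.
    rewrite Aform; last lia.
    have := ps_le (sigma (Cword k.+1)) u; lia.
  have -> : 5 * fib k.+2 - 4 + u = (size (W k) + u).+1 by lia.
  rewrite Bform; last lia.
  have := ps_le (Cword k.+1) u.
  have := sumn_sigma F7; lia.
move=> /andP [H1 H2].
have Hx : x - (6 + sumn (W k.+1)) <= sumn (sigma (Cword k.+1)) + 1 by lia.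
case: (ML1 F7 Hx) => [[u Hu E]|[u Hu E]].
  left; exists u; first lia.
  have -> : 5 * fib k.+3 - 4 + u = (size (W k.+1) + u).+1 by lia.
  rewrite Aform //; lia.
right; exists u; first lia.
have -> : 5 * fib k.+2 - 4 + u = (size (W k) + u).+1 by lia.
rewrite Bform //; lia.
Qed.

Lemma part_iii k u v : u <= 5 * fib k.+2 -> v <= 5 * fib k.+1 ->
  a_seq (5 * fib k.+3 - 4 + u) <> b_seq (5 * fib k.+2 - 4 + v).
Proof.
case: (facts k) => [F1 [F2 [F3 [F4 [F5 [F6 F7]]]]]] Hu Hv.
have -> : 5 * fib k.+3 - 4 + u = (size (W k.+1) + u).+1 by lia.
have -> : 5 * fib k.+2 - 4 + v = (size (W k) + v).+1 by lia.
rewrite Aform; last lia. rewrite Bform; last lia.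
have := @ML2 _ u v F7; lia.
Qed.

Lemma part_i k p q :
     5 * fib k.+3 - 4 <= p < 5 * fib k.+4 - 4 ->
     5 * fib k.+2 - 4 <= q < 5 * fib k.+3 - 4 ->
     b_seq q = a_seq p + 1 ->
     (b_seq q.+1 - b_seq q = 3 ->
        [/\ a_seq p.+1 = a_seq p + 2, a_seq p.+2 = a_seq p + 3
          & b_seq q.+1 = a_seq p.+2 + 1]) /\
     (b_seq q.+1 - b_seq q = 2 ->
        a_seq p.+1 = a_seq p + 2 /\ b_seq q.+1 = a_seq p.+1 + 1).
Proof.
case: (facts k) => [F1 [F2 [F3 [F4 [F5 [F6 F7]]]]]] /andP [Hp1 Hp2] /andP [Hq1 Hq2].
have F8 := fibS k.+2; have F9 := fibS k.+1.
set w := Cword k.+1 in F4 F5 F6 F7 *.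
set P := p - (5 * fib k.+3 - 4).
set Q := q - (5 * fib k.+2 - 4).
have HP : P < size (sigma w) by rewrite /P; lia.
have HQ : Q < size w by rewrite /Q; lia.
have ap0 : a_seq p = 6 + sumn (W k.+1) + ps (sigma w) P.
  have -> : p = (size (W k.+1) + P).+1 by rewrite /P; lia.
  by rewrite Aform // ltnW.
have ap1 : a_seq p.+1 = 6 + sumn (W k.+1) + ps (sigma w) P.+1.
  have -> : p.+1 = (size (W k.+1) + P.+1).+1 by rewrite /P; lia.
  by rewrite Aform.
have ap2 : P.+2 <= size (sigma w) ->
    a_seq p.+2 = 6 + sumn (W k.+1) + ps (sigma w) P.+2.
  move=> H; have -> : p.+2 = (size (W k.+1) + P.+2).+1 by rewrite /P; lia.
  by rewrite Aform.
have bq0 : b_seq q = 6 + sumn (W k.+1) + (ps w Q + Q).+1.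
  have -> : q = (size (W k) + Q).+1 by rewrite /Q; lia.
  by rewrite Bform // ltnW.
have bq1 : b_seq q.+1 = 6 + sumn (W k.+1) + (ps w Q.+1 + Q.+1).+1.
  have -> : q.+1 = (size (W k) + Q.+1).+1 by rewrite /Q; lia.
  by rewrite Bform.
move=> Hb.
have E : ps (sigma w) P = ps w Q + Q by lia.
have [H1 H2] := ML3 F7 HQ E.
have H3 := ps_succ HQ.
split.
  move=> Hd.
  have Hn : nth 0 w Q = 2 by lia.
  have [H4 H5] := H2 Hn.
  move: (ap2 H4) => H6; split; lia.
move=> Hd; split; lia.
Qed.

Lemma mono (f : nat -> nat) d : (forall m, f m + d <= f m.+1) ->
  forall m j, f m + d * j <= f (m + j).
Proof.
move=> H m; elim => [|j IH]; first by rewrite muln0 addn0 addn0.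
have := H (m + j); rewrite addnS; lia.
Qed.

Lemma a_mono m j : a_seq m.+1 + j <= a_seq (m + j).+1.
Proof.
have := @mono (fun m => a_seq m.+1) 1 _ m j; rewrite mul1n; apply.
move=> i; rewrite a_S; case: (c12 i); lia.
Qed.

Lemma b_mono m j : b_seq m.+1 + 2 * j <= b_seq (m + j).+1.
Proof.
have := @mono (fun m => b_seq m.+1) 2 _ m j; apply.
move=> i; rewrite b_S; case: (c12 i); lia.
Qed.

Lemma exist_k x : 11 <= x -> exists k, 5 * fib k.+4 - 4 <= x <= 5 * fib k.+4.+1 - 3.
Proof.
move=> Hx.
suff : exists k, 5 * fib k.+4 - 4 <= x <= 5 * fib k.+4.+1 - 3.
  by [].
have -> : x = 11 + (x - 11) by lia.
elim: (x - 11) => [|j [k /andP [H1 H2]]]; first by exists 0.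
have F1 := fibS k.+3; have F2 := fibS k.+4; have F3 := fib_pos k.+2.
have F4 := fibS k.+2.
case: (ltnP (11 + j).+1 (5 * fib k.+4.+1 - 2)) => H.
  exists k; apply/andP; split; lia.
exists k.+1; apply/andP; split; lia.
Qed.

Lemma ps_sigma1 w : 0 < size w -> ps (sigma w) 1 = 2.
Proof. case: w => [|y w] // _; rewrite sigma_cons /ps; case: (y == 1) => /=; by rewrite ?take0. Qed.

Lemma ps0 w : ps w 0 = 0.
Proof. by rewrite /ps take0. Qed.

Lemma part_iv m m' : 1 <= m -> 1 <= m' -> a_seq m <> b_seq m'.
Proof.
case: m => [|i] // _; case: m' => [|i'] // _ E.
have Hx : 12 <= b_seq i'.+1 by rewrite /b_seq leq_addr.
have H11 : 11 <= b_seq i'.+1 by lia.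
have [k /andP [H1 H2]] := exist_k H11.
case: (facts k) => [F1 [F2 [F3 [F4 [F5 [F6 F7]]]]]].
have F8 := fibS k.+3.
have A0 := @Aform k 0 (leq0n _); rewrite addn0 ps0 in A0.
have B0 := @Bform k 0 (leq0n _); rewrite addn0 ps0 in B0.
have Bend := @Bform k (size (Cword k.+1)) (leqnn _).
rewrite /ps take_size in Bend.
have Aend : a_seq (size (W k.+2) + 1).+1 = 5 * fib k.+4.+1 - 2.
  rewrite a_block; last by case: (Cword_props k.+2) => _ -> _; have := fib_pos k.+2; lia.
  case: (W_props k.+2) => _ _ G.
  rewrite Cword_sigma ps_sigma1; last by case: (Cword_props k.+1) => _ -> _; have := fib_pos k.+1; lia.
  lia.
have SW : size (W k.+2) = size (W k.+1) + size (sigma (Cword k.+1)).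
  by rewrite W_S size_cat Cword_sigma.
have SW' : size (W k.+1) = size (W k) + size (Cword k.+1) by rewrite W_S size_cat.
have S1 := sumn_sigma F7.
have Hi1 : size (W k.+1) <= i.
  case: (leqP (size (W k.+1)) i) => // Hlt.
  have := a_mono i (size (W k.+1) - i); rewrite subnKC; last lia.
  lia.
have Hi2 : i <= size (W k.+1) + size (sigma (Cword k.+1)).
  case: (leqP i (size (W k.+1) + size (sigma (Cword k.+1)))) => // Hlt.
  have := a_mono (size (W k.+2) + 1) (i - (size (W k.+2) + 1)); rewrite subnKC; last lia.
  lia.
have Hj1 : size (W k) <= i'.
  case: (leqP (size (W k)) i') => // Hlt.
  have := b_mono i' (size (W k) - i'); rewrite subnKC; last lia.
  lia.
have Hj2 : i' <= size (W k) + size (Cword k.+1).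
  case: (leqP i' (size (W k) + size (Cword k.+1))) => // Hlt.
  have := b_mono (size (W k) + size (Cword k.+1)) (i' - (size (W k) + size (Cword k.+1))).
  rewrite subnKC; last lia.
  have := ps_le (Cword k.+1) (size (Cword k.+1)); lia.
move: E.
have -> : i = size (W k.+1) + (i - size (W k.+1)) by lia.
have -> : i' = size (W k) + (i' - size (W k)) by lia.
rewrite Aform; last lia. rewrite Bform; last lia.
have := @ML2 (Cword k.+1) (i - size (W k.+1)) (i' - size (W k)) F7; lia.
Qed.
Lemma part_v x :
  ((exists2 m, 1 <= m & x = a_seq m) \/ (exists2 m, 1 <= m & x = b_seq m))
  <-> 6 <= x.
Proof.
split.
  by case=> [[m _ ->]|[m _ ->]]; rewrite ?/a_seq ?/b_seq; lia.
move=> H6.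
case: (leqP x 10) => Hx.
  left; exists (x - 5); first lia.
  have -> : x - 5 = (size (W 0) + (x - 6)).+1 by rewrite /W /=; lia.
  rewrite a_block; last by rewrite /=; lia.
  rewrite /W /=.
  have : x - 6 <= 5 by lia.
  case: (x - 6) (subnKC H6) => [|[|[|[|[|[|u]]]]]] //= <- _; lia.
have [k /andP [H1 H2]] := exist_k Hx.
have Hr : 5 * fib k.+4 - 4 <= x <= 5 * fib k.+4.+1 - 3 by rewrite H1 H2.
case: (proj2 (part_ii k x) Hr) => [[u Hu ->]|[u Hu ->]].
  left; eexists; last reflexivity; have := fib_ge k; lia.
right; eexists; last reflexivity; have := fib_ge k; lia.
Qed.

Theorem lemma4p3 (n : nat) (hn : 1 <= n) :
  (* (i) *)
  (forall p q : nat,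
     5 * fib n.+2 - 4 <= p < 5 * fib n.+3 - 4 ->
     5 * fib n.+1 - 4 <= q < 5 * fib n.+2 - 4 ->
     b_seq q = a_seq p + 1 ->
     (b_seq q.+1 - b_seq q = 3 ->
        [/\ a_seq p.+1 = a_seq p + 2, a_seq p.+2 = a_seq p + 3
          & b_seq q.+1 = a_seq p.+2 + 1]) /\
     (b_seq q.+1 - b_seq q = 2 ->
        a_seq p.+1 = a_seq p + 2 /\ b_seq q.+1 = a_seq p.+1 + 1)) /\
  (* (ii) *)
  (forall x : nat,
     ((exists2 u, u <= 5 * fib n.+1 & x = a_seq (5 * fib n.+2 - 4 + u)) \/
      (exists2 u, u <= 5 * fib n & x = b_seq (5 * fib n.+1 - 4 + u)))
     <-> 5 * fib n.+3 - 4 <= x <= 5 * fib n.+4 - 3) /\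
  (* (iii) *)
  (forall u v : nat, u <= 5 * fib n.+1 -> v <= 5 * fib n ->
     a_seq (5 * fib n.+2 - 4 + u) <> b_seq (5 * fib n.+1 - 4 + v)) /\
  (* (iv) *)
  (forall m m' : nat, 1 <= m -> 1 <= m' -> a_seq m <> b_seq m') /\
  (* (v) *)
  (forall x : nat,
     ((exists2 m, 1 <= m & x = a_seq m) \/ (exists2 m, 1 <= m & x = b_seq m))
     <-> 6 <= x).
Proof.
case: n hn => [|k] // _.
split; first exact: part_i.
split; first exact: part_ii.
split; first exact: part_iii.
split; first exact: part_iv.
exact: part_v.
Qed.
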